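(* Let $n$ be a nonnegative integer and $0<\pi<1$. Let $(Y,T)$ be the pair of random variables with joint probability mass function $$P(Y=k,T=t)=\#\mathcal{P}_{k,n-k}(t)\,(1-\pi)^{n-k}\pi^k$$ for $k=0,1,\dots,n$ and $t=0,1,\dots,k(n-k)$, and $0$ otherwise. Then $$E(YT)=\binom{n}{2}\pi(1-\pi)\bigl(\pi(n-2)+1\bigr),\qquad \operatorname{Cov}(Y,T)=\binom{n}{2}\pi(1-\pi)(1-2\pi).$$
   Context: For integers $k\ge0$ and $m\ge 0$, $\#\mathcal{P}_{k,m}(t)$ denotes the number of integer tuples $(\lambda_1,\dots,\lambda_k)$ with $m\ge\lambda_1\ge\cdots\ge\lambda_k\ge0$ and $\lambda_1+\cdots+\lambda_k=t$. Interpretation: in $n$ independent Bernoulli trials each with success probability $\pi$, $Y$ is the number of successes and $T$ is the number of pairs (success, later failure) in the outcome sequence. *)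

(* Defs.v *)
From mathcomp Require Import all_boot all_order all_algebra.
Set Implicit Arguments. Unset Strict Implicit. Unset Printing Implicit Defensive.
Import Order.TTheory GRing.Theory Num.Theory.

Definition nbox (k m t : nat) : nat :=
  #|[set f : {ffun 'I_k -> 'I_m.+1} |
      [forall i : 'I_k, forall j : 'I_k, (i <= j)%N ==> (f j <= f i)%N]
      && ((\sum_(i < k) (f i : nat))%N == t)]|.

Local Open Scope ring_scope.

Definition pmfYT (R : realFieldType) (n : nat) (p : R) (k t : nat) : R :=
  if (k <= n)%N && (t <= k * (n - k))%N
  then (nbox k (n - k) t)%:R * (1 - p) ^+ (n - k) * p ^+ k
  else 0.

(* Expectations: the pmf vanishes outside k <= n, t <= k(n-k) <= n*n,
   so sums over k < n+1, t < n*n+1 range over the whole support. *)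
Definition E_YT (R : realFieldType) (n : nat) (p : R) : R :=
  \sum_(k < n.+1) \sum_(t < (n * n).+1) (k * t)%:R * pmfYT n p k t.
Definition E_Y (R : realFieldType) (n : nat) (p : R) : R :=
  \sum_(k < n.+1) \sum_(t < (n * n).+1) k%:R * pmfYT n p k t.
Definition E_T (R : realFieldType) (n : nat) (p : R) : R :=
  \sum_(k < n.+1) \sum_(t < (n * n).+1) t%:R * pmfYT n p k t.
Definition Cov_YT (R : realFieldType) (n : nat) (p : R) : R :=
  E_YT n p - E_Y n p * E_T n p.

(* Main.v *)
Require Import Defs.
From mathcomp Require Import all_boot all_order all_algebra.
From mathcomp Require Import zify ring.
Set Implicit Arguments. Unset Strict Implicit. Unset Printing Implicit Defensive.
Import Order.TTheory GRing.Theory Num.Theory.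

Definition nonincr k m (f : {ffun 'I_k -> 'I_m.+1}) :=
  [forall i : 'I_k, forall j : 'I_k, (i <= j)%N ==> (f j <= f i)%N].
Definition sumf k m (f : {ffun 'I_k -> 'I_m.+1}) := (\sum_(i < k) (f i : nat))%N.

Lemma sumf_le k m (f : {ffun 'I_k -> 'I_m.+1}) : sumf f <= k * m.
Proof.
rewrite /sumf -[k in k * m]card_ord -sum_nat_const.
by apply: leq_sum => i _; rewrite -ltnS.
Qed.

Definition phi k m (f : {ffun 'I_k -> 'I_m.+1}) : k.-tuple 'I_m.+1 :=
  [tuple rev_ord (f i) | i < k].
Definition psi k m (t : k.-tuple 'I_m.+1) : {ffun 'I_k -> 'I_m.+1} :=
  [ffun i => rev_ord (tnth t i)].

Lemma phiK k m : cancel (@phi k m) (@psi k m).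
Proof. by move=> f; apply/ffunP => i; rewrite ffunE tnth_mktuple rev_ordK. Qed.
Lemma psiK k m : cancel (@psi k m) (@phi k m).
Proof. by move=> t; apply/eq_from_tnth => i; rewrite tnth_mktuple ffunE rev_ordK. Qed.

Lemma nonincr_psi k m (t : k.-tuple 'I_m.+1) :
  nonincr (psi t) = sorted leq (map val t).
Proof.
rewrite sorted_pairwise; last exact: leq_trans.
apply/forallP/(pairwiseP 0) => [H i j | H i].
  rewrite !inE size_map size_tuple => ilt jlt ij.
  have := forallP (H (Ordinal ilt)) (Ordinal jlt).
  rewrite /= ltnW //= !ffunE /= !(tnth_nth ord0) /= !(nth_map ord0) ?size_tuple //.
  move: (@ltn_ord m.+1 (nth ord0 t i)) (@ltn_ord m.+1 (nth ord0 t j)) => a b; lia.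
apply/forallP => j; apply/implyP => ij.
rewrite !ffunE /=.
have hi := ltn_ord i; have hj := ltn_ord j.
move: (@ltn_ord m.+1 (tnth t i)) (@ltn_ord m.+1 (tnth t j)).
rewrite !(tnth_nth ord0).
case: (ltngtP i j) ij => // [lij|eij] _.
  have := H i j; rewrite !inE size_map size_tuple => /(_ hi hj lij).
  rewrite !(nth_map ord0) ?size_tuple // => a b c; move: a => /= a; lia.
by have -> : j = i by apply: val_inj. 
Qed.

Lemma cardA k m : #|[set f : {ffun 'I_k -> 'I_m.+1} | nonincr f]| = 'C(k + m, k).
Proof.
rewrite -card_sorted_tuples -(card_imset _ (can_inj (@phiK k m))).
rewrite (can2_imset_pre _ (@phiK k m) (@psiK k m)).
by apply: eq_card => t; rewrite !inE nonincr_psi.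
Qed.

Definition cmp k m (f : {ffun 'I_k -> 'I_m.+1}) : {ffun 'I_k -> 'I_m.+1} :=
  [ffun i => rev_ord (f (rev_ord i))].

Lemma cmpK k m : involutive (@cmp k m).
Proof. by move=> f; apply/ffunP => i; rewrite !ffunE !rev_ordK. Qed.

Lemma nonincr_cmp1 k m (f : {ffun 'I_k -> 'I_m.+1}) : nonincr f -> nonincr (cmp f).
Proof.
move=> /forallP H; apply/forallP => i; apply/forallP => j; apply/implyP => ij.
rewrite !ffunE /=.
have hr : (rev_ord j <= rev_ord i)%N by rewrite /=; move: (ltn_ord i) (ltn_ord j) ij; clear; lia.
have := implyP (forallP (H (rev_ord j)) (rev_ord i)) hr.
move: (ltn_ord (f (rev_ord i))) (ltn_ord (f (rev_ord j))).
move: (f (rev_ord i)) (f (rev_ord j)) => x y /=; clear; lia.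
Qed.

Lemma nonincr_cmp k m (f : {ffun 'I_k -> 'I_m.+1}) : nonincr (cmp f) = nonincr f.
Proof.
apply/idP/idP; last exact: nonincr_cmp1.
by move=> /nonincr_cmp1; rewrite cmpK.
Qed.

Lemma sumf_cmp k m (f : {ffun 'I_k -> 'I_m.+1}) : sumf f + sumf (cmp f) = k * m.
Proof.
rewrite /sumf (reindex_inj rev_ord_inj) /= -big_split /=.
rewrite -[k in k * m]card_ord -sum_nat_const; apply: eq_bigr => i _.
rewrite ffunE /=.
move: (ltn_ord (f (rev_ord i))); move: (f (rev_ord i)) => x /=; clear; lia.
Qed.

Lemma sum_sumf k m :
  2 * (\sum_(f : {ffun 'I_k -> 'I_m.+1} | nonincr f) sumf f) =
  k * m * #|[set f : {ffun 'I_k -> 'I_m.+1} | nonincr f]|.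
Proof.
rewrite mul2n -addnn {2}(reindex_inj (inv_inj (@cmpK k m))) /=.
rewrite [in X in _ + X](eq_bigl (@nonincr k m)); last by move=> f; rewrite nonincr_cmp.
rewrite -big_split /=.
rewrite (eq_bigr (fun _ => k * m)); last by move=> f _; exact: sumf_cmp.
rewrite sum_nat_const mulnC; congr (_ * _).
by apply: eq_card => f; rewrite inE.
Qed.

Local Open Scope ring_scope.

Lemma sumT (R : realFieldType) k m B (g : nat -> R) : (k * m < B)%N ->
  \sum_(t < B) (nbox k m t)%:R * g t =
  \sum_(f : {ffun 'I_k -> 'I_m.+1} | nonincr f) g (sumf f).
Proof.
move=> hB.
have hf : forall f : {ffun 'I_k -> 'I_m.+1}, (sumf f < B)%N.
  by move=> f; exact: leq_ltn_trans (sumf_le f) hB.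
rewrite (partition_big (fun f => Ordinal (hf f)) xpredT) //=.
apply: eq_bigr => t _.
rewrite (eq_bigr (fun _ => g t)); last first.
  by move=> f /andP[_ /eqP <-].
rewrite [RHS](eq_bigr (fun _ => 1 * g t)); last by move=> *; rewrite mul1r.
rewrite -mulr_suml; congr (_ * _).
rewrite (eq_bigr (fun _ => (1%N)%:R)) // -natr_sum sum1dep_card /nbox; congr (_ %:R).
Qed.

Lemma fmom (R : realFieldType) (p : R) j n :
  \sum_(k < n.+1) (k ^_ j)%:R * ('C(n, k)%:R * ((1 - p) ^+ (n - k) * p ^+ k))
  = (n ^_ j)%:R * p ^+ j.
Proof.
elim: j n => [|j IH] n.
  have f0 : forall x, (x ^_ 0)%:R = 1 :> R by [].
  rewrite f0 mul1r expr0.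
  transitivity ((1 - p + p) ^+ n); last by rewrite subrK expr1n.
  rewrite exprDn.
  by apply: eq_bigr => k _; rewrite -mulr_natl; ring.
case: n => [|n].
  by rewrite big_ord_recl big_ord0 /= !mul0r !add0r.
rewrite big_ord_recl /= mul0r add0r.
rewrite (eq_bigr (fun i : 'I_n.+1 => (n.+1)%:R * p *
   ((i ^_ j)%:R * ('C(n, i)%:R * ((1 - p) ^+ (n - i) * p ^+ i))))); last first.
  move=> i _; rewrite /bump /= add1n ffactSS subSS exprS.
  have e : (i.+1 * i ^_ j * 'C(n.+1, i.+1) = n.+1 * 'C(n, i) * i ^_ j)%N.
    by rewrite mulnC mulnA [('C(_, _) * _)%N]mulnC -mul_bin_diag /= mulnC mulnA.
  have e' : ((i.+1 * i ^_ j)%:R * 'C(n.+1, i.+1)%:R : R) = (n.+1)%:R * 'C(n, i)%:R * (i ^_ j)%:R.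
    by rewrite -!natrM e.
  by rewrite mulrA e'; ring.
by rewrite -mulr_sumr IH ffactSS natrM exprS; ring.
Qed.

Lemma nbox0 k m t : (k * m < t)%N -> nbox k m t = 0%N.
Proof.
move=> h; apply/eqP; rewrite cards_eq0; apply/eqP/setP => f; rewrite !inE.
have := sumf_le f; rewrite /sumf => hf.
by apply/negbTE; rewrite negb_and; apply/orP; right; apply/eqP => e; move: hf; rewrite e leqNgt h.
Qed.

Lemma inner (R : realFieldType) n (p : R) (g : nat -> R) k : (k <= n)%N ->
  \sum_(t < (n * n).+1) g t * pmfYT n p k t =
  ((1 - p) ^+ (n - k) * p ^+ k) *
  \sum_(f : {ffun 'I_k -> 'I_(n - k).+1} | nonincr f) g (sumf f).
Proof.
move=> kn.
rewrite -(@sumT R k (n - k) (n * n).+1); last first.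
  by rewrite ltnS leq_mul // leq_subr.
rewrite mulr_sumr; apply: eq_bigr => t _.
rewrite /pmfYT kn /=; case: leqP => ht; first by ring.
by rewrite nbox0 // mulr0 mul0r mulr0.
Qed.

Lemma cntc (R : realFieldType) k m (c : R) :
  \sum_(f : {ffun 'I_k -> 'I_m.+1} | nonincr f) c = c * ('C(k + m, k))%:R.
Proof.
rewrite -cardA (eq_bigr (fun _ => c * 1)); last by move=> *; rewrite mulr1.
rewrite -mulr_sumr (eq_bigr (fun _ => (1%N)%:R)) // -natr_sum sum1dep_card.
congr (_ * _%:R); by apply: eq_card => f; rewrite inE.
Qed.

Lemma cntS (R : realFieldType) k m :
  \sum_(f : {ffun 'I_k -> 'I_m.+1} | nonincr f) (sumf f)%:R =
  (k * m)%:R * ('C(k + m, k))%:R / 2 :> R.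
Proof.
have h := sum_sumf k m; rewrite cardA in h.
rewrite -natr_sum -natrM -h natrM [_%:R * _]mulrC mulfK //.
by rewrite pnatr_eq0.
Qed.

Lemma ff2 (R : realFieldType) k : (k ^_ 2)%:R = k%:R * (k%:R - 1) :> R.
Proof. case: k => [|k]; first by rewrite mul0r. by rewrite ffactSS ffactn1 natrM -addn1 natrD addrK. Qed.

Lemma ff3 (R : realFieldType) k : (k ^_ 3)%:R = k%:R * (k%:R - 1) * (k%:R - 2) :> R.
Proof.
case: k => [|k]; first by rewrite !mul0r.
rewrite ffactSS natrM ff2 -addn1 natrD addrK.
have -> : (k%:R + 1 - 2 : R) = k%:R - 1 by ring.
by ring.
Qed.

Lemma ff1 (R : realFieldType) k : (k ^_ 1)%:R = k%:R :> R.
Proof. by rewrite ffactn1. Qed.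

Definition ww (R : realFieldType) n (p : R) k := (1 - p) ^+ (n - k) * p ^+ k.
Definition FF (R : realFieldType) n (p : R) j (k : nat) := (k ^_ j)%:R * ('C(n, k)%:R * ww n p k).

Lemma lin (R : realFieldType) n (p : R) (a1 a2 a3 : R) :
  \sum_(k < n.+1) (a1 * FF n p 1 k + a2 * FF n p 2 k + a3 * FF n p 3 k) =
  a1 * ((n ^_ 1)%:R * p) + a2 * ((n ^_ 2)%:R * p ^+ 2) + a3 * ((n ^_ 3)%:R * p ^+ 3).
Proof.
rewrite !big_split /= -!mulr_sumr /FF /ww !fmom; by rewrite expr1.
Qed.

Lemma EY (R : realFieldType) n (p : R) : E_Y n p = \sum_(k < n.+1) (1 * FF n p 1 k + 0 * FF n p 2 k + 0 * FF n p 3 k).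
Proof.
rewrite /E_Y; apply: eq_bigr => k _.
have kn : (k <= n)%N by rewrite -ltnS.
rewrite (inner _ (fun _ => (k : nat)%:R) kn) cntc subnKC // /FF /ww ff1.
ring.
Qed.

Lemma ET (R : realFieldType) n (p : R) : E_T n p = \sum_(k < n.+1) ((n%:R - 1) / 2 * FF n p 1 k + (- 1 / 2) * FF n p 2 k + 0 * FF n p 3 k).
Proof.
rewrite /E_T; apply: eq_bigr => k _.
have kn : (k <= n)%N by rewrite -ltnS.
rewrite (inner _ (fun t => t%:R) kn) cntS subnKC // /FF /ww ff1 ff2.
rewrite natrM natrB //.
ring.
Qed.

Lemma EYT (R : realFieldType) n (p : R) : E_YT n p = \sum_(k < n.+1) ((n%:R - 1) / 2 * FF n p 1 k + (n%:R - 3) / 2 * FF n p 2 k + (- 1 / 2) * FF n p 3 k).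
Proof.
rewrite /E_YT; apply: eq_bigr => k _.
have kn : (k <= n)%N by rewrite -ltnS.
rewrite (inner _ (fun t => (k * t)%:R) kn).
rewrite (eq_bigr (fun f => (k%:R : R) * (sumf f)%:R)); last by move=> f _; rewrite natrM.
rewrite -mulr_sumr cntS subnKC // /FF /ww ff1 ff2 ff3.
rewrite natrM natrB //.
ring.
Qed.



Unset Implicit Arguments.

Theorem theorem3 (R : realFieldType) (n : nat) (p : R) :
  0 < p -> p < 1 ->
  E_YT n p = ('C(n, 2))%:R * p * (1 - p) * (p * (n%:R - 2) + 1) /\
  Cov_YT n p = ('C(n, 2))%:R * p * (1 - p) * (1 - 2 * p).
Proof.
move=> _ _.
have c2 : ('C(n, 2))%:R = (n ^_ 2)%:R / 2 :> R.
  by rewrite -bin_ffact natrM mulfK // pnatr_eq0.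
have hYT := EYT n p; rewrite lin in hYT.
have hY := EY n p; rewrite lin in hY.
have hT := ET n p; rewrite lin in hT.
rewrite /Cov_YT hYT hY hT c2 !ff1 !ff2 !ff3.
split; ring.
Qed.
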